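(* Let $f(v)=\frac12|v-1|$ (Total Variation), so $f^*(u)=u$ with $\mathrm{dom}(f^* )=[-\frac12,\frac12]$. In the binary noisy-label setting described in the context, $\mathrm{Bias}_f(h,g)$ is constant (in $h$ and $g$), and for any hypothesis space $\mathcal H$, $D_f(P_{h\times Y}\|Q_{h\times Y})$ is $\mathcal H$-robust with label noise.
   Context: $(X,Y)$ with $X\in\mathcal X$, $Y\in\{-1,+1\}$; noisy label $\tilde Y$ generated from $Y$, conditionally independently of $X$ given $Y$, with $e_+={\mathbb P}(\tilde Y=-1\mid Y=+1)$, $e_-={\mathbb P}(\tilde Y=+1\mid Y=-1)$, $e_++e_-<1$. A hypothesis space $\mathcal H$ is a set of classifiers $h:\mathcal X\to\{-1,+1\}$. $P_{h\times Y}(y,y')={\mathbb P}(h(X)=y,Y=y')$, $Q_{h\times Y}(y,y')={\mathbb P}(h(X)=y){\mathbb P}(Y=y')$, and $\tilde P_{h\times\tilde Y},\tilde Q_{h\times\tilde Y}$ the same with $\tilde Y$. $D_f(P\|Q)=\sum_z q(z)f(p(z)/q(z))$. For $g:\{-1,+1\}^2\to\mathrm{dom}(f^* )$, $\Delta^y_f(h,g)=\mathbb E_X[g(h(X),y)]-\mathbb E_X[f^*(g(h(X),y))]$ and $\mathrm{Bias}_f(h,g)=e_+\Delta^{-1}_f(h,g)+e_-\Delta^{+1}_f(h,g)$. With $h^*_f\in\arg\max_{h\in\mathcal H}D_f(P_{h\times Y}\|Q_{h\times Y})$, $D_f$ is $\mathcal H$-robust if $h^*_f=\arg\max_{h\in\mathcal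 H}D_f(\tilde P_{h\times\tilde Y}\|\tilde Q_{h\times\tilde Y})$. *)

(* Defs.v *)
(* Labels {-1,+1} are encoded as bool: true = +1, false = -1. *)
From HB Require Import structures.
From mathcomp Require Import all_boot all_order all_algebra.
From mathcomp Require Import all_classical all_reals all_analysis.
Set Implicit Arguments. Unset Strict Implicit. Unset Printing Implicit Defensive.
Import Order.TTheory GRing.Theory Num.Theory.
Local Open Scope classical_set_scope.
Local Open Scope ring_scope.

Section Defs.
Context {R : realType} {d : measure_display} {T : measurableType d}
        {dx : measure_display} {Xs : measurableType dx}.
Variable P : probability T R.

Definition prb (A : set T) : R := fine (P A).

(* P(Yn = yn | Y = y) (ratio; conventionally 0 if P(Y=y)=0) *)
Definition condprob (Y Yn : T -> bool) (yn y : bool) : R :=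
  prb [set t | Yn t = yn /\ Y t = y] / prb [set t | Y t = y].

Definition cond_indep (X : T -> Xs) (Y Yn : T -> bool) : Prop :=
  forall B : set Xs, measurable B -> forall y yn : bool,
    prb [set t | B (X t) /\ Y t = y /\ Yn t = yn] * prb [set t | Y t = y]
    = prb [set t | B (X t) /\ Y t = y] * prb [set t | Y t = y /\ Yn t = yn].

Definition Pjoint (X : T -> Xs) (Y : T -> bool) (h : Xs -> bool) (a y : bool) : R :=
  prb [set t | h (X t) = a /\ Y t = y].

Definition Qprod (X : T -> Xs) (Y : T -> bool) (h : Xs -> bool) (a y : bool) : R :=
  prb [set t | h (X t) = a] * prb [set t | Y t = y].

Definition Delta (fstar : R -> R) (X : T -> Xs) (h : Xs -> bool)
    (g : bool -> bool -> R) (y : bool) : \bar R :=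
  (\int[P]_t (g (h (X t)) y)%:E - \int[P]_t (fstar (g (h (X t)) y))%:E)%E.

Definition Bias (fstar : R -> R) (X : T -> Xs) (eplus eminus : R)
    (h : Xs -> bool) (g : bool -> bool -> R) : \bar R :=
  (eplus%:E * Delta fstar X h g false + eminus%:E * Delta fstar X h g true)%E.

End Defs.

Definition Df {R : realType} (f : R -> R) (p q : bool -> bool -> R) : R :=
  \sum_(a : bool) \sum_(y : bool) q a y * f (p a y / q a y).

Definition fTV {R : realType} (v : R) : R := 2^-1 * `|v - 1|.
Definition fTV_star {R : realType} (u : R) : R := u.
Definition in_dom_fTV_star {R : realType} (u : R) : Prop := - 2^-1 <= u <= 2^-1.

Definition is_argmax {A : Type} {R : realType} (H : set A) (F : A -> R) (h : A) : Prop :=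
  H h /\ forall h', H h' -> F h' <= F h.

(* Main.v *)
Require Import Defs.
From HB Require Import structures.
From mathcomp Require Import all_boot all_order all_algebra.
From mathcomp Require Import all_classical all_reals all_analysis.
From mathcomp Require Import ring lra.
Import Order.TTheory GRing.Theory Num.Theory.
Local Open Scope classical_set_scope.
Local Open Scope ring_scope.

Section Prb.
Context (R : realType) (d : measure_display) (T : measurableType d) (P : probability T R).

Lemma Pfin (A : set T) : measurable A -> (P A \is a fin_num)%E.
Proof.
move=> mA; rewrite ge0_fin_numE ?measure_ge0 //.
exact: (le_lt_trans (probability_le1 P mA) (ltry 1)).
Qed.

Lemma prb_ge0 (A : set T) : 0 <= prb P A.
Proof. by apply: fine_ge0; exact: measure_ge0. Qed.

Lemma prbT : prb P setT = 1.
Proof. by rewrite /prb probability_setT. Qed.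

Lemma prb_le (A B : set T) : measurable A -> measurable B -> A `<=` B -> prb P A <= prb P B.
Proof.
move=> mA mB AB; apply: fine_le; rewrite ?inE; try exact: Pfin.
by apply: le_measure; rewrite ?inE.
Qed.

Lemma prb_split (Q : T -> Prop) (Z : T -> bool) :
  measurable [set t | Q t] -> measurable [set t | Z t = true] ->
  prb P [set t | Q t] = prb P [set t | Q t /\ Z t = true] + prb P [set t | Q t /\ Z t = false].
Proof.
move=> mQ mZ.
have mZf : measurable [set t | Z t = false].
  have -> : [set t | Z t = false] = ~` [set t | Z t = true].
    by apply/funext => t /=; apply/propext; case: (Z t); split => //; move=> H; exfalso; apply: H.
  exact: measurableC.
have -> : [set t | Q t] = [set t | Q t /\ Z t = true] `|` [set t | Q t /\ Z t = false].
  apply/funext => t /=; apply/propext; case: (Z t); split; tauto.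
have e1 : [set t | Q t /\ Z t = true] = [set t | Q t] `&` [set t | Z t = true] by [].
have e2 : [set t | Q t /\ Z t = false] = [set t | Q t] `&` [set t | Z t = false] by [].
rewrite /prb measureU ?fineD ?e1 ?e2; try apply: Pfin; try apply: measurableI => //.
- congr (fine (P _) + fine (P _)); apply/funext => t /=; apply/propext; case: (Z t); split; tauto.
- apply/funext => t /=; apply/propext; case: (Z t); split => //; try tauto.
  all: by move=> [[_ H1] [_ H2]].
Qed.
Lemma prb_ext (A B : set T) : (forall t, A t <-> B t) -> prb P A = prb P B.
Proof. by move=> H; congr (prb P _); apply/funext => t; apply/propext. Qed.

Lemma termTV (p q : R) : 0 <= q -> (q = 0 -> p = 0) -> q * fTV (p / q) = 2^-1 * `|p - q|.
Proof.
move=> q0 qp; have [qz|qn0] := eqVneq q 0.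
  by rewrite qz qp // mul0r subrr normr0 mulr0.
rewrite /fTV mulrCA; congr (_ * _); rewrite -{1}(ger0_norm q0) -normrM; congr `|_|.
by field.
Qed.

Context (dx : measure_display) (Xs : measurableType dx) (X : T -> Xs).

Lemma DfTV (h : Xs -> bool) (Z : T -> bool)
  (mk : forall a, measurable [set t | h (X t) = a])
  (mZ : forall y, measurable [set t | Z t = y]) :
  Df fTV (Pjoint P X Z h) (Qprod P X Z h) =
  2 * `|Pjoint P X Z h true true * Pjoint P X Z h false false
        - Pjoint P X Z h true false * Pjoint P X Z h false true|.
Proof.
set p := Pjoint P X Z h.
have qa : forall a, prb P [set t | h (X t) = a] = p a true + p a false.
  by move=> a; rewrite (prb_split _ Z) //; exact: mZ.
have qy : forall y, prb P [set t | Z t = y] = p true y + p false y.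
  move=> y; rewrite (prb_split _ (fun t => h (X t))) //.
  rewrite /p /Pjoint; congr (_ + _); apply: prb_ext => t /=; tauto.
have S : p true true + p true false + p false true + p false false = 1.
  have e := prb_split (fun _ => True) (fun t => h (X t)) measurableT (mk true).
  have e2 : prb P [set _ | True] = 1 by exact: prbT.
  have e3 : forall b, prb P [set t | True /\ h (X t) = b] = prb P [set t | h (X t) = b].
    by move=> b; apply: prb_ext => t /=; tauto.
  rewrite e2 !e3 in e.
  by rewrite qa qa in e; rewrite e !addrA.
have pq : forall a y, p a y <= prb P [set t | h (X t) = a] /\ p a y <= prb P [set t | Z t = y].
  move=> a y; have mI : measurable [set t | h (X t) = a /\ Z t = y] := measurableI _ _ (mk a) (mZ y).
  by split; apply: prb_le => // t [].
have T2 : forall a y, Qprod P X Z h a y * fTV (p a y / Qprod P X Z h a y)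
                     = 2^-1 * `|p a y - Qprod P X Z h a y|.
  move=> a y; apply: termTV; first by apply: mulr_ge0; exact: prb_ge0.
  move/eqP; rewrite mulf_eq0 => /orP [] /eqP H0; apply/le_anti/andP; split;
    rewrite ?prb_ge0 //; have [H1 H2] := pq a y; by rewrite -H0.
rewrite /Df !big_bool /= !T2 /Qprod !qa !qy.
have Hp : p false false = 1 - p true true - p true false - p false true by rewrite -S; ring.
have -> : p true true - (p true true + p true false) * (p true true + p false true)
   = p true true * p false false - p true false * p false true by rewrite Hp; ring.
have -> : p true false - (p true true + p true false) * (p true false + p false false)
   = - (p true true * p false false - p true false * p false true) by rewrite Hp; ring.
have -> : p false true - (p false true + p false false) * (p true true + p false true)
   = - (p true true * p false false - p true false * p false true) by rewrite Hp; ring.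
have -> : p false false - (p false true + p false false) * (p true false + p false false)
   = (p true true * p false false - p true false * p false true) by rewrite Hp; ring.
rewrite !normrN; set u := `|_|; lra.
Qed.
End Prb.
Lemma mfun_bool (R : realType) (g : bool -> R) : measurable_fun setT g.
Proof. by move=> _ B mB; rewrite setTI; exact: I. Qed.

Lemma int_fin (R : realType) (d : measure_display) (T : measurableType d) (P : probability T R)
  (k : T -> bool) (mk : measurable_fun setT k) (g : bool -> R) :
  (\int[P]_t (g (k t))%:E \is a fin_num)%E.
Proof.
apply: integrable_fin_num; first exact: measurableT.
change (P.-integrable setT (EFin \o (fun t => g (k t)))).
  apply: measurable_bounded_integrable => //.
  - exact: (le_lt_trans (probability_le1 P measurableT) (ltry 1)).
  - apply: measurableT_comp; last exact: mk. exact: mfun_bool.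
  - exists (`|g true| + `|g false|); split; first by rewrite num_real.
    move=> x Hx t _; apply: le_trans (ltW Hx); case: (k t) => /=.
    + by rewrite lerDl.
    + by rewrite lerDr.
Qed.

Lemma key (R : realType) (d : measure_display) (T : measurableType d)
  (dx : measure_display) (Xs : measurableType dx) (P : probability T R)
  (X : T -> Xs) (Y Yn : T -> bool)
  (mX : measurable_fun setT X)
  (mY : forall y : bool, measurable [set t | Y t = y])
  (mYn : forall y : bool, measurable [set t | Yn t = y])
  (indep : cond_indep P X Y Yn)
  (noise : condprob P Y Yn false true + condprob P Y Yn true false < 1) (h : Xs -> bool) (mh : measurable_fun setT h) :
  Df fTV (Pjoint P X Yn h) (Qprod P X Yn h) =
  (1 - condprob P Y Yn false true - condprob P Y Yn true false) *
  Df fTV (Pjoint P X Y h) (Qprod P X Y h).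
Proof.
have mk : forall a, measurable [set t | h (X t) = a].
  move=> a; have H1 := measurableT_comp mh mX.
  have := H1 measurableT [set a] I; rewrite setTI; exact.
have mB : forall a, measurable (h @^-1` [set a]).
  by move=> a; have := mh measurableT [set a] I; rewrite setTI.
rewrite !DfTV //.
set p := Pjoint P X Y h; set pt := Pjoint P X Yn h.
pose r a y yn := prb P [set t | h (X t) = a /\ Y t = y /\ Yn t = yn].
pose pi y := prb P [set t | Y t = y].
pose s y yn := prb P [set t | Y t = y /\ Yn t = yn].
have ptE : forall a yn, pt a yn = r a true yn + r a false yn.
  move=> a yn; rewrite /pt /Pjoint (@prb_split _ _ _ P _ Y) //; last first. exact: (measurableI _ _ (mk a) (mYn yn)).
  by congr (_ + _); apply: prb_ext => t /=; tauto.
have ind : forall a y yn, r a y yn * pi y = p a y * s y yn.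
  by move=> a y yn; exact (indep _ (mB a) y yn).
have spi : forall y, s y true + s y false = pi y.
  by move=> y; rewrite /pi (@prb_split _ _ _ P _ Yn).
have ppi : forall a y, 0 <= p a y <= pi y.
  move=> a y; rewrite prb_ge0 /=; apply: prb_le => //.
    exact: (measurableI _ _ (mk a) (mY y)).
  by move=> t [].
have rpi : forall a y yn, r a y yn <= pi y.
  move=> a y yn; apply: prb_le => //.
    exact: (measurableI _ _ (mk a) (measurableI _ _ (mY y) (mYn yn))).
  by move=> t [_ []].
pose al y yn := s y yn / pi y.
have ra : forall a y yn, r a y yn = p a y * al y yn.
  move=> a y yn; have [pi0|pin0] := eqVneq (pi y) 0.
    have p0 : p a y = 0.
      by apply/le_anti/andP; split; [rewrite -pi0; case/andP: (ppi a y) | case/andP: (ppi a y)].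
    have r0 : r a y yn = 0.
      by apply/le_anti/andP; split; [rewrite -pi0 | exact: prb_ge0].
    by rewrite p0 r0 mul0r.
  by rewrite /al mulrA -ind mulfK.
have ep : condprob P Y Yn false true = al true false.
  by rewrite /condprob /al /s /pi; congr (_ / _); apply: prb_ext => t /=; tauto.
have em : condprob P Y Yn true false = al false true.
  by rewrite /condprob /al /s /pi; congr (_ / _); apply: prb_ext => t /=; tauto.
rewrite ep em !ptE !ra.
set c := 1 - al true false - al false true.
set del := p true true * p false false - p true false * p false true.
have det : p true true * al true true + p true false * al false true
  = p true true * al true true + p true false * al false true by [].
have -> : (p true true * al true true + p true false * al false true) *
    (p false true * al true false + p false false * al false false) -
    (p true true * al true false + p true false * al false false) *
    (p false true * al true true + p false false * al false true)
  = del * (al true true * al false false - al true false * al false true).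
  by rewrite /del; ring.
have -> : del * (al true true * al false false - al true false * al false true) = del * c.
  have [pi0|pin0] := eqVneq (pi true) 0.
    have p1 : p true true = 0.
      by apply/le_anti/andP; split; [rewrite -pi0; case/andP: (ppi true true) | case/andP: (ppi true true)].
    have p2 : p false true = 0.
      by apply/le_anti/andP; split; [rewrite -pi0; case/andP: (ppi false true) | case/andP: (ppi false true)].
    by rewrite /del p1 p2 !(mul0r, mulr0, subrr).
  have [pi0'|pin0'] := eqVneq (pi false) 0.
    have p1 : p true false = 0.
      by apply/le_anti/andP; split; [rewrite -pi0'; case/andP: (ppi true false) | case/andP: (ppi true false)].
    have p2 : p false false = 0.
      by apply/le_anti/andP; split; [rewrite -pi0'; case/andP: (ppi false false) | case/andP: (ppi false false)].
    by rewrite /del p1 p2 !(mul0r, mulr0, subrr).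
  have a1 : al true true = 1 - al true false.
    by rewrite /al -(divff pin0) -spi; field; rewrite spi.
  have a0 : al false false = 1 - al false true.
    by rewrite /al -(divff pin0') -spi; field; rewrite spi.
  by rewrite a1 a0 /c; ring.
rewrite normrM (@gtr0_norm _ c); first ring.
by rewrite /c; move: noise; rewrite ep em; lra.
Qed.

Theorem theorem7 (R : realType) (d : measure_display) (T : measurableType d)
  (dx : measure_display) (Xs : measurableType dx) (P : probability T R)
  (X : T -> Xs) (Y Yn : T -> bool)
  (mX : measurable_fun setT X)
  (mY : forall y : bool, measurable [set t | Y t = y])
  (mYn : forall y : bool, measurable [set t | Yn t = y])
  (indep : cond_indep P X Y Yn)
  (noise : condprob P Y Yn false true + condprob P Y Yn true false < 1) :
  let eplus := condprob P Y Yn false true in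
  let eminus := condprob P Y Yn true false in
  (* Bias_f is constant in h and g *)
  (exists c : \bar R, forall (h : Xs -> bool) (g : bool -> bool -> R),
      measurable_fun setT h ->
      (forall a y, in_dom_fTV_star (g a y)) ->
      Bias P fTV_star X eplus eminus h g = c) /\
  (* D_f is H-robust for every hypothesis space H *)
  (forall H : set (Xs -> bool), (forall h, H h -> measurable_fun setT h) ->
     forall h : Xs -> bool,
       is_argmax H (fun h => Df fTV (Pjoint P X Y h) (Qprod P X Y h)) h <->
       is_argmax H (fun h => Df fTV (Pjoint P X Yn h) (Qprod P X Yn h)) h).
Proof.
move=> eplus eminus; split.
  exists 0%E => h g mh _.
  have mk : measurable_fun setT (fun t => h (X t)) := measurableT_comp mh mX.
  rewrite /Bias /Delta /fTV_star.
  have F : forall y, (\int[P]_t (g (h (X t)) y)%:E \is a fin_num)%E.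
    move=> y; exact (@int_fin _ _ _ P _ mk (fun b => g b y)).
  rewrite !subee ?F //.
  by rewrite !mule0 adde0.
move=> H Hm h.
have c0 : 0 < 1 - eplus - eminus by rewrite /eplus /eminus; lra.
have K : forall h, H h -> Df fTV (Pjoint P X Yn h) (Qprod P X Yn h) =
  (1 - eplus - eminus) * Df fTV (Pjoint P X Y h) (Qprod P X Y h).
  by move=> h' Hh'; exact: (@key R d T dx Xs P X Y Yn mX mY mYn indep noise h' (Hm h' Hh')).
split; move=> [Hh Hmax]; split => // h' Hh'.
  by rewrite /= !K // ler_pM2l //; exact: Hmax.
by rewrite /= -(ler_pM2l c0) -!K //; exact: Hmax.
Qed.
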